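(* Let $Y^*\in\mathcal L^1(\mathcal Q)$ and let the range $\{\mu_{\mathcal Q}(A)\mid A\in\mathcal F\}$ be relatively compact in $(l^\infty(\mathcal Q),\|\cdot\|_\infty)$. If $\rho_{\mathcal Q}(Y^*\mathbb 1_{\{Y^*>a\}})\to0$ as $a\to\infty$, then $\rho_{\mathcal Q}$ is continuous from above at $0$.
   Context: Let $(\Omega,\mathcal F,\mathrm P)$ be a probability space (equipped with a filtration $(\mathcal F_t)_{0\le t\le T}$, $\mathcal F=\mathcal F_T$). $\mathcal Q$ is a nonempty set of probability measures on $\mathcal F$, each absolutely continuous w.r.t. $\mathrm P$. $\mathcal L^1(\mathcal Q)$ is the set of random variables $X$ with $\sup_{\mathrm Q\in\mathcal Q}\mathbb E_{\mathrm Q}[|X|]<\infty$. $Y=(Y_t)_{0\le t\le T}$ is a right-continuous adapted process with bounded paths and $Y^*:=\sup_{t\in[0,T]}|Y_t|$. $\mathcal X$ is the set of random variables $X$ with $|X|\le C(Y^*+1)$ $\mathrm P$-a.s. for some $C>0$; $\rho_{\mathcal Q}(X)=\sup_{\mathrm Q\in\mathcal Q}\mathbb E_{\mathrm Q}[X]$ for $X\in\mathcal X$; $\rho_{\mathcal Q}$ is continuous from above at $0$ if $\rho_{\mathcal Q}(X_n)\searrow0$ whenever $X_n\in\mathcal X$, $X_n\searrow0$ $\mathrm P$-a.s. $l^\infty(\mathcal Q)$ is the space of bounded real functions on $\mathcal Q$ with sup-norm, and $\mu_{\mathcal Q}(A)(\mathrm Q)=\mathrm Q(A)$ for $A\in\mathcal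 F$. *)

(* Defs.v *)
From HB Require Import structures.
From mathcomp Require Import all_boot all_order all_algebra.
From mathcomp Require Import all_classical all_reals all_analysis.
Set Implicit Arguments. Unset Strict Implicit. Unset Printing Implicit Defensive.
Import Order.TTheory GRing.Theory Num.Theory.
Import numFieldNormedType.Exports.
Local Open Scope classical_set_scope.
Local Open Scope ring_scope.

Section defs.
Context d (T : measurableType d) (R : realType).

Definition Ystar (Y : R -> T -> R) (Tend : R) (w : T) : R :=
  sup [set `|Y t w| | t in `[0, Tend]].

Definition in_L1Q (Q : set (probability T R)) (X : T -> R) : Prop :=
  (ereal_sup [set (\int[Qm]_w (`|X w|)%:E)%E | Qm in Q] < +oo)%E.

Definition in_Xspace (P : probability T R) (Ys : T -> R) (X : T -> R) : Prop :=
  measurable_fun setT X /\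
  exists C : R, 0 < C /\ {ae P, forall w, `|X w| <= C * (Ys w + 1)}.

Definition rhoQ (Q : set (probability T R)) (X : T -> R) : \bar R :=
  ereal_sup [set (\int[Qm]_w (X w)%:E)%E | Qm in Q].

Definition rhoQ_cont_from_above_at0 (P : probability T R)
    (Q : set (probability T R)) (Ys : T -> R) : Prop :=
  forall Xn : nat -> T -> R,
    (forall n, in_Xspace P Ys (Xn n)) ->
    {ae P, forall w, (forall n, Xn n.+1 w <= Xn n w) /\ (Xn ^~ w @ \oo --> 0)} ->
    (forall n, (rhoQ Q (Xn n.+1) <= rhoQ Q (Xn n))%E) /\
    (rhoQ Q \o Xn @ \oo --> 0%E).

Definition muQ (A : set T) : probability T R -> R := fun Qm => fine (Qm A).

End defs.

(* Main.v *)
Require Import Defs.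
From HB Require Import structures.
From mathcomp Require Import all_boot all_order all_algebra.
From mathcomp Require Import all_classical all_reals all_analysis.
From mathcomp Require Import measurable_realfun.
From mathcomp Require Import ring lra.
Import Order.TTheory GRing.Theory Num.Theory.
Import numFieldNormedType.Exports.
Local Open Scope classical_set_scope.
Local Open Scope ring_scope.

Lemma unif_mu (d : measure_display) (T : measurableType d) (R : realType)
  (Q : set (probability T R)) (A : nat -> set T) :
  compact (closure ([set muQ A | A in measurable] : set {uniform` Q -> R})) ->
  (forall n, measurable (A n)) -> (forall n, A n.+1 `<=` A n) ->
  \bigcap_n A n = set0 ->
  forall e, 0 < e -> exists N, forall n, (N <= n)%N ->
    forall Qm, Q Qm -> fine (Qm (A n)) <= e.
Proof.
move=> cpt mA decA capA e e0.
pose f n : {uniform` Q -> R} := muQ (A n).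
have ndA : {homo A : n m / (n <= m)%N >-> (m <= n)%O}.
  by apply/nonincreasing_seqP => n; apply/subsetPset/decA.
have fpt Qm : (fun n => f n Qm) @ \oo --> 0.
  have A0 : (Qm (A 0%N) < +oo)%E.
    by rewrite (le_lt_trans (probability_le1 _ (mA 0%N))) ?ltry.
  have := @nonincreasing_cvg_mu _ _ _ Qm A A0 mA (bigcapT_measurable mA) ndA.
  by rewrite capA measure0 => /fine_cvgP[].
have Fcl : (f @ \oo) (closure ([set muQ A | A in measurable] : set {uniform` Q -> R})).
  by apply: (@filterE nat \oo _) => n /=; apply: subset_closure; exists (A n).
have [g [_ clus]] := cpt (f @ \oo) (fmap_proper_filter f _) Fcl.
have nb (r : R) : 0 < r -> nbhs g [set h : {uniform` Q -> R} | forall Qm, Q Qm -> `|g Qm - h Qm| < r].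
  move=> r0; apply/uniform_nbhs.
  exists [set xy : R * R | ball xy.1 r xy.2]; split.
    by rewrite -entourage_ballE; exists r.
  by move=> h /= hb Qm QQm; have := hb Qm QQm; rewrite /ball /=.
have g0 Qm : Q Qm -> g Qm = 0.
  move=> QQm; apply/eqP/negPn/negP => gne.
  have r0 : 0 < `|g Qm| / 2 by rewrite divr_gt0 ?normr_gt0.
  have Fs : (f @ \oo) [set h : {uniform` Q -> R} | `|h Qm| < `|g Qm| / 2].
    have := fpt Qm => /cvgrPdist_lt/(_ _ r0).
    by apply: filterS => n /=; rewrite sub0r normrN.
  have [h [/= h1 h2]] := clus _ _ Fs (nb _ r0).
  have := ler_distD (h Qm) (g Qm) 0.
  rewrite !subr0.
  have := h2 Qm QQm; rewrite distrC => h2'.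
  move=> /le_lt_trans/(_ (ltrD h2' h1)).
  by rewrite -splitr ltxx.
have Fr : (f @ \oo) (range f).
  by apply: (@filterE nat \oo _) => n /=; exists n.
have [h [[n _ <-] /= hn]] := clus _ _ Fr (nb _ e0).
exists n => m nm Qm QQm.
have := hn Qm QQm; rewrite g0 // sub0r normrN /f /muQ => hlt.
apply/ltW/(le_lt_trans _ hlt)/(le_trans _ (ler_norm _)).
have fin k : Qm (A k) \is a fin_num.
  by rewrite ge0_fin_numE ?measure_ge0 // (le_lt_trans (probability_le1 _ (mA k))) ?ltry.
rewrite fine_le ?fin //; apply: le_measure; rewrite ?inE //.
by apply/subsetPset/ndA.
Qed.

Lemma le_integral_nm (d : measure_display) (T : measurableType d) (R : realType)
  (mu : {measure set T -> \bar R}) (f1 f2 : T -> \bar R) :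
  (forall x, (0 <= f1 x)%E) -> (forall x, (f1 x <= f2 x)%E) ->
  (\int[mu]_x f1 x <= \int[mu]_x f2 x)%E.
Proof.
move=> f10 f12.
have f20 x : (0 <= f2 x)%E by apply: le_trans (f12 x).
rewrite !ge0_integralTE //; apply: ereal_sup_le => _ [h hf1 <-].
by exists h => // x; apply: le_trans (hf1 x) (f12 x).
Qed.
Theorem lemma6p8 (d : measure_display) (T : measurableType d) (R : realType)
  (P : probability T R) (Q : set (probability T R))
  (Tend : R) (Y : R -> T -> R) :
  0 < Tend ->
  Q !=set0 ->
  (forall Qm, Q Qm -> Qm `<< P) ->
  (forall t, measurable_fun setT (Y t)) ->
  (forall w t, t \in `[0, Tend[ -> Y ^~ w @ t^'+ --> Y t w) ->
  (forall w, exists M : R, forall t, t \in `[0, Tend] -> `|Y t w| <= M) ->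
  in_L1Q Q (Ystar Y Tend) ->
  compact (closure ([set muQ A | A in measurable] : set {uniform` Q -> R})) ->
  (rhoQ Q (fun w => Ystar Y Tend w * \1_[set w' | Ystar Y Tend w' > a] w)
     @[a --> +oo] --> 0%E) ->
  rhoQ_cont_from_above_at0 P Q (Ystar Y Tend).
Proof.
move=> T0 Qne QP mY rcY bY L1 cpt tail Xn HX Hae.
set Ys := Ystar Y Tend.
have Ys0 w : 0 <= Ys w.
  have [M HM] := bY w.
  apply: le_trans (normr_ge0 (Y 0 w)) _.
  apply: ub_le_sup; last by exists 0 => //; rewrite /= in_itv /= lexx ltW.
  by exists M => _ [t tI <-]; apply: HM; rewrite inE.
have [mX0 [C [C0 aeC]]] := HX 0%N.
have [N [mN PN0 subN]] := filterI Hae aeC.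
have good w : ~ N w -> ((forall n, Xn n.+1 w <= Xn n w) /\ (Xn ^~ w @ \oo --> 0))
    /\ `|Xn 0%N w| <= C * (Ys w + 1).
  by move=> Nw; apply: contrapT => H; apply: Nw; apply: subN.
pose Xc n w := Xn n w * \1_(~` N) w.
have mXc n : measurable_fun setT (Xc n).
  apply: measurable_funM; first exact: (HX n).1.
  by apply: measurable_indic; exact: measurableC.
have XcN w n : N w -> Xc n w = 0.
  by move=> Nw; rewrite /Xc indicE memNset /= ?mulr0 // => /(_ Nw).
have XcG w n : ~ N w -> Xc n w = Xn n w.
  by move=> Nw; rewrite /Xc indicE mem_set ?mulr1.
have Xc_dec w n : Xc n.+1 w <= Xc n w.
  have [Nw|Nw] := pselect (N w); first by rewrite !XcN.
  by rewrite !XcG //; have [[]] := good w Nw.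
have Xc_cvg w : Xc ^~ w @ \oo --> 0.
  have [Nw|Nw] := pselect (N w).
    rewrite (_ : Xc ^~ w = fun=> 0); first exact: cvg_cst.
    by apply: funext => n; rewrite XcN.
  rewrite (_ : Xc ^~ w = Xn ^~ w); first by have [[]] := good w Nw.
  by apply: funext => n; rewrite XcG.
have Xc_hom w : {homo Xc ^~ w : n m / (n <= m)%N >-> m <= n}.
  by apply/nonincreasing_seqP => n; apply: Xc_dec.
have Xc_ge0 w n : 0 <= Xc n w.
  have := nonincreasing_cvgn_ge (Xc_hom w) (cvgP _ (Xc_cvg w)) n.
  by rewrite (cvg_lim _ (Xc_cvg w)).
have Xc_le w n : Xc n w <= C * (Ys w + 1).
  have [Nw|Nw] := pselect (N w).
    rewrite XcN //; apply: mulr_ge0; [exact: ltW|by rewrite addr_ge0 ?Ys0].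
  apply: le_trans (Xc_hom w _ _ (leq0n n)) _.
  rewrite XcG //; apply: le_trans (ler_norm _) _.
  by have [] := good w Nw.
have QN Qm : Q Qm -> Qm N = 0%E.
  move=> QQm; apply: (QP Qm QQm N) => //.
  move=> A mA AN; apply/eqP; rewrite eq_le measure_ge0 andbT -PN0.
  by apply: le_measure; rewrite ?inE.
have eqI (Qm : probability T R) n : Q Qm ->
    (\int[Qm]_w (Xn n w)%:E = \int[Qm]_w (Xc n w)%:E)%E.
  move=> QQm; apply: ae_eq_integral => //.
  - exact/measurable_EFinP/(HX n).1.
  - exact/measurable_EFinP/mXc.
  exists N; split => //; first exact: QN.
  move=> w /= H; apply: contrapT => Nw; apply: H => _.
  by rewrite XcG.
have main e : 0 < e -> exists N0, forall n, (N0 <= n)%N ->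
    forall Qm, Q Qm -> (\int[Qm]_w (Xc n w)%:E <= e%:E)%E.
  move=> e0.
  pose e3 := e / 3.
  have e30 : 0 < e3 by rewrite divr_gt0.
  have e3E : e = 3 * e3 by rewrite /e3 mulrC divfK.
  clearbody e3.
  set δ := e3 / (2 * C).
  have δ0 : 0 < δ by rewrite divr_gt0 // mulr_gt0.
  have [a [[fa ha] a0]] : exists a,
      (rhoQ Q (fun w => Ys w * \1_[set w' | Ys w' > a] w) \is a fin_num /\
      `|0 - fine (rhoQ Q (fun w => Ys w * \1_[set w' | Ys w' > a] w))| <= δ) /\ 0 <= a.
    have /fine_cvgP[tf tc] := tail.
    move: tc => /cvgrPdist_le /(_ δ δ0) tc.
    have h3 : \forall a \near +oo, (0:R) <= a by exact: nbhs_pinfty_ge.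
    have [a [[h1 h2] h4]] := filter_ex (filterI (filterI tf tc) h3).
    by exists a.
  have tailQ (Qm : probability T R) : Q Qm ->
      (\int[Qm]_w (Ys w * \1_[set w' | a < Ys w'] w)%R%:E <= δ%:E)%E.
    move=> QQm.
    have h : (\int[Qm]_w (Ys w * \1_[set w' | a < Ys w'] w)%R%:E <=
       rhoQ Q (fun w => (Ys w * \1_[set w' | Ys w' > a] w)%R))%E.
      by apply: ereal_sup_ubound; exists Qm.
    apply: le_trans h _.
    rewrite -(fineK fa) lee_fin; move: ha; rewrite sub0r normrN.
    exact: le_trans (ler_norm _).
  set M := C * (a + 1).
  have M0 : 0 < M by rewrite mulr_gt0 //; lra.
  pose A n := [set w | e3 < Xc n w].
  have mA n : measurable (A n).
    suff -> : A n = [set x | (e3%:E < (Xc n x)%:E)%E].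
      rewrite -[X in measurable X]setTI; apply: measurable_lte => //.
      exact/measurable_EFinP/mXc.
    by apply/seteqP; split => w; rewrite /A /= lte_fin.
  have decA n : A n.+1 `<=` A n by move=> w /= h; apply: lt_le_trans h (Xc_dec w n).
  have capA : \bigcap_n A n = set0.
    apply/seteqP; split => // w /= Aw.
    have := Xc_cvg w => /cvgrPdist_lt/(_ e3 e30) /filter_ex [n].
    rewrite sub0r normrN => h.
    by have := lt_trans (Aw n I) (le_lt_trans (ler_norm _) h); rewrite ltxx.
  set e2 := e3 / M.
  have e20 : 0 < e2 by rewrite divr_gt0.
  have [N0 HN0] := @unif_mu d T R Q A cpt mA decA capA e2 e20.
  exists N0 => n Nn Qm QQm.
  have QmA : (Qm (A n) <= e2%:E)%E.
    have fin : Qm (A n) \is a fin_num.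
      by rewrite ge0_fin_numE ?measure_ge0 // (le_lt_trans (probability_le1 _ (mA n))) ?ltry.
    by rewrite -(fineK fin) lee_fin HN0.
  have mmin : measurable_fun setT (fun w => Num.min (Xc n w) M).
    exact: measurable_minr (mXc n) (measurable_cst _).
  have mmax : measurable_fun setT (fun w => Num.max (Xc n w - M) 0).
    exact: measurable_maxr (measurable_funB (mXc n) (measurable_cst M)) (measurable_cst _).
  have min0 w : 0 <= Num.min (Xc n w) M.
    by rewrite minEle; case: (leP (Xc n w) M) => _; [exact: Xc_ge0|exact: ltW].
  have max0 w : 0 <= Num.max (Xc n w - M) 0.
    by rewrite maxEle; case: (leP (Xc n w - M) 0) => // /ltW.
  have -> : (\int[Qm]_w (Xc n w)%:E = \int[Qm]_w (Num.min (Xc n w) M)%:E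
       + \int[Qm]_w (Num.max (Xc n w - M) 0)%:E)%E.
    rewrite -ge0_integralD //; last 4 first.
    - by move=> w _; rewrite lee_fin.
    - exact/measurable_EFinP.
    - by move=> w _; rewrite lee_fin.
    - exact/measurable_EFinP.
    apply: eq_integral => w _; rewrite -EFinD; congr EFin.
    rewrite minEle maxEle.
    by have [h1|h1] := leP (Xc n w) M; have [h2|h2] := leP (Xc n w - M) 0; lra.
  have B1 : (\int[Qm]_w (Num.min (Xc n w) M)%:E <= (e3 + M * e2)%:E)%E.
    have mind : measurable_fun setT (\1_(A n) : T -> R).
      exact: measurable_indic.
    apply: le_trans (_ : _ <= \int[Qm]_w (e3 + M * \1_(A n) w)%:E)%E _.
      apply: ge0_le_integral => //.
      - by move=> w _; rewrite lee_fin.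
      - exact/measurable_EFinP.
      - apply/measurable_EFinP; apply: measurable_funD; first exact: measurable_cst.
        by apply: measurable_funM => //; exact: measurable_cst.
      move=> w _; rewrite lee_fin minEle indicE.
      have Xw0 := Xc_ge0 w n.
      have [h|h] := pselect (A n w).
        rewrite mem_set // mulr1; case: (leP (Xc n w) M) => h'; lra.
      have h' : Xc n w <= e3 by move: h; rewrite /A /= => /negP; rewrite -leNgt.
      rewrite memNset // mulr0 addr0; case: (leP (Xc n w) M) => h''; lra.
    under eq_integral do rewrite EFinD.
    have c1 : forall w, [set: T] w -> (0 <= e3%:E)%E by move=> w _; rewrite lee_fin ltW.
    have c2 : measurable_fun [set: T] (fun _ : T => e3%:E) by exact: measurable_cst.
    have c3 : forall w, [set: T] w -> (0 <= (M * \1_(A n) w)%:E)%E.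
      by move=> w _; rewrite lee_fin mulr_ge0 // ltW.
    have c4 : measurable_fun [set: T] (fun w => (M * \1_(A n) w)%:E).
      apply/measurable_EFinP; apply: measurable_funM => //; exact: measurable_cst.
    rewrite ge0_integralD //.
    rewrite integral_cst //.
    rewrite -[(e3%:E * _)%E]/(e3%:E * Qm [set: T])%E (probability_setT Qm) mule1.
    rewrite [X in (_ + X <= _)%E](_ : _ = (M%:E * \int[Qm]_x (\1_(A n) x)%:E)%E); last first.
      rewrite -ge0_integralZl //; try exact/measurable_EFinP;
        try (by move=> w _; rewrite lee_fin); try (by rewrite lee_fin ltW).
    rewrite integral_indic // setIT EFinD leeD2l // [(M * e2)%:E]EFinM.
    by apply: lee_wpmul2l => //; rewrite lee_fin ltW.
  have B2 : (\int[Qm]_w (Num.max (Xc n w - M) 0)%:E <= e3%:E)%E.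
    have H : (((2 * C)^-1)%:E * \int[Qm]_w (Num.max (Xc n w - M) 0)%:E <= δ%:E)%E.
      rewrite -ge0_integralZl //; last 3 first.
      - exact/measurable_EFinP.
      - by move=> w _; rewrite lee_fin.
      - by rewrite lee_fin invr_ge0 mulr_ge0 // ltW.
      apply: le_trans (tailQ Qm QQm); apply: le_integral_nm => w.
        by rewrite -EFinM lee_fin mulr_ge0 // invr_ge0 mulr_ge0 // ltW.
      rewrite -EFinM lee_fin maxEle.
      have Xw := Xc_le w n; have Xw0 := Xc_ge0 w n; have Yw := Ys0 w.
      case: ifP => h.
        by rewrite mulr0 indicE; case: (_ \in _); rewrite /= ?mulr1 ?mulr0.
      move/negbT: h; rewrite -ltNge => h.
      have ay : a < Ys w by rewrite /M in h; nra.
      rewrite indicE mem_set //= mulr1 ler_pdivrMl ?mulr_gt0 //.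
      by rewrite /M in h *; nra.
    have -> : (\int[Qm]_w (Num.max (Xc n w - M) 0)%:E =
        ((2 * C)%:E * (((2 * C)^-1)%:E * \int[Qm]_w (Num.max (Xc n w - M) 0)%:E)))%E.
      by rewrite muleA -EFinM mulfV ?mul1e // gt_eqF // mulr_gt0.
    apply: le_trans (lee_wpmul2l _ H) _; first by rewrite lee_fin mulr_ge0 // ltW.
    by rewrite -EFinM lee_fin /δ mulrC divfK // gt_eqF // mulr_gt0.
  apply: le_trans (leeD B1 B2) _.
  rewrite -EFinD lee_fin /e2 mulrC divfK ?gt_eqF // e3E; lra.
have intge0 (Qm : probability T R) n : (0 <= \int[Qm]_w (Xc n w)%:E)%E.
  by apply: integral_ge0 => w _; rewrite lee_fin.
have rho_ge0 n : (0 <= rhoQ Q (Xn n))%E.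
  case: Qne => Q0 QQ0; apply: le_trans (intge0 Q0 n) _.
  by apply: ereal_sup_ubound; exists Q0 => //; rewrite eqI.
split.
  move=> n; apply: ge_ereal_sup => _ [Qm QQm <-].
  have h1 : (\int[Qm]_w (Xc n.+1 w)%:E <= \int[Qm]_w (Xc n w)%:E)%E.
    apply: ge0_le_integral => //.
    - by move=> w _; rewrite lee_fin.
    - exact/measurable_EFinP/mXc.
    - exact/measurable_EFinP/mXc.
    - by move=> w _; rewrite lee_fin.
  rewrite eqI //; apply: le_trans h1 _.
  by apply: ereal_sup_ubound; exists Qm => //; rewrite eqI.
have bnd e : 0 < e -> \forall n \near \oo, (rhoQ Q (Xn n) <= e%:E)%E.
  move=> e0; have [N0 HN0] := main e e0.
  apply: filterS (nbhs_infty_ge N0) => n Nn.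
  apply: ge_ereal_sup => _ [Qm QQm <-]; rewrite eqI //; exact: HN0.
apply/fine_cvgP; split.
  apply: filterS (bnd 1 ltr01) => n h.
  by rewrite ge0_fin_numE ?rho_ge0 // (le_lt_trans h) ?ltry.
apply/cvgrPdist_le => e e0.
apply: filterS (bnd e e0) => n h /=.
have f : rhoQ Q (Xn n) \is a fin_num by rewrite ge0_fin_numE ?rho_ge0 // (le_lt_trans h) ?ltry.
rewrite sub0r normrN ger0_norm ?fine_ge0 ?rho_ge0 //.
by rewrite -lee_fin fineK.
Qed.
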